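(* Let $p\ne5$ be an odd prime. Then $$\sum_{k=1}^{[\frac{p+1}4]}\binom{4k-2}{2k-1}\frac1{20^k}\equiv\begin{cases}0\pmod p&\text{if }p\equiv\pm1\pmod5,\\ \mp(-1)^{\frac{p-1}2}\frac12\pmod p&\text{if }p\equiv\pm2\pmod5.\end{cases}$$
   Context: $[x]$ is the greatest integer $\le x$. *)

(* Defs.v *)
(* Congruences mod a prime p are stated as equalities in 'F_p. *)
From HB Require Import structures.
From mathcomp Require Import all_boot all_order all_algebra.
Set Implicit Arguments. Unset Strict Implicit. Unset Printing Implicit Defensive.
Import Order.TTheory GRing.Theory Num.Theory.

(* Main.v *)
Require Import Defs.
From HB Require Import structures.
From mathcomp Require Import all_boot all_order all_algebra.
From mathcomp Require Import all_fingroup all_solvable all_field zify ring.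
Import GRing.Theory FinRing.Theory.
Local Open Scope ring_scope.

Lemma p4_mod20 (p : nat) : odd p -> (p %% 5 != 0)%N -> (20 %| p ^ 4 - 1)%N.
Proof.
move=> op p5.
have h: (p ^ 4 = 1 %[mod 20])%N.
  rewrite -modnXm.
  have: (p %% 20 < 20)%N by rewrite ltn_mod.
  have: odd (p %% 20) by rewrite (@odd_mod p 20 erefl) op.
  have: ((p %% 20) %% 5 != 0)%N.
    by rewrite (@modn_dvdm 20 p 5 isT).
  move: (p %% 20)%N => r.
  do 20! (case: r => [|r]; first by []).
  by [].
move: h; move: (p ^ 4)%N => x; lia.
Qed.

Lemma exists_zeta (p : nat) : prime p -> odd p -> (p %% 5 != 0)%N ->
  exists F : fieldType, exists _ : p \in [pchar F], exists z : F,
    z ^+ 10 = -1 /\ z ^+ 2 + 1 != 0.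
Proof.
move=> hp op p5.
have [Fm chF cardF] := pPrimePowerField hp (isT : (0 < 4)%N).
have /cyclicP [x Gx] := field_unit_group_cyclic [set: {unit Fm}]%G.
have ox : #[x]%g = (p ^ 4).-1.
  by rewrite /order -Gx card_finField_unit cardF.
have d20 := @p4_mod20 p op p5.
set q := ((p ^ 4 - 1) %/ 20)%N.
have oxq : #[x]%g = (q * 20)%N by rewrite ox divnK // subn1.
have ou : #[(x ^+ q)%g]%g = 20%N.
  have p3 : (3 <= p)%N.
    by have := prime_gt1 hp; case: p op {hp p5 cardF chF ox d20 q oxq} => [|[|[|]]].
  have q0 : (0 < q)%N.
    rewrite divn_gt0 //; have : (p ^ 4 = p * p * p * p)%N by rewrite !expnS expn0 muln1 !mulnA.
    by move=> ->; nia.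
  have dq : (q %| #[x]%g)%N by rewrite oxq dvdn_mulr.
  by rewrite (orderXdiv dq) oxq mulKn.
exists Fm, chF, (FinRing.uval (x ^+ q)%g).
have hv k : (FinRing.uval (x ^+ q)%g) ^+ k = 1 -> (20 %| k)%N.
  rewrite -val_unitX => h.
  rewrite -ou order_dvdn; apply/eqP; apply: val_inj; exact: h.
have e20 : (FinRing.uval (x ^+ q)%g) ^+ 20 = 1.
  by rewrite -val_unitX -ou expg_order.
split.
  have : (FinRing.uval (x ^+ q)%g ^+ 10) ^+ 2 == 1 by rewrite -exprM e20.
  rewrite sqrf_eq1 => /orP [/eqP h|/eqP //].
  by have := hv _ h.
apply/negP => /eqP h.
have : (FinRing.uval (x ^+ q)%g) ^+ 4 = 1.
  by rewrite (exprM _ 2 2); move/eqP: h; rewrite addr_eq0 => /eqP ->; rewrite expr2 mulrNN mulr1.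
by move/hv.
Qed.

Lemma cbin m : (m.+1 * 'C((m.+1) * 2, m.+1) = 2 * (m * 2).+1 * 'C(m * 2, m))%N.
Proof.
have e1 := mul_bin_diag ((m.+1) * 2) m.
have e2 := mul_bin_diag ((m * 2).+1) m.
have e3 : 'C((m * 2).+1, m.+1) = 'C((m * 2).+1, m).
  by rewrite -bin_sub; [congr 'C(_, _); lia | lia].
rewrite /= e3 in e2.
have e1' : (((m.+1) * 2) * 'C((m * 2).+1, m) = m.+1 * 'C(m.+1 * 2, m.+1))%N.
  by rewrite -e1; have -> : ((m.+1 * 2).-1 = (m*2).+1)%N by lia.
rewrite -e1' -mulnA -[in RHS]mulnA e2; lia.
Qed.

Lemma sum_pairs (R : nmodType) (h : nat -> R) M :
  \sum_(0 <= i < M * 2) h i = \sum_(0 <= j < M) (h (j * 2)%N + h (j * 2).+1).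
Proof.
elim: M => [|M IH]; first by rewrite !big_geq.
rewrite [RHS]big_nat_recr //= -IH.
have -> : (M.+1 * 2 = (M * 2).+2)%N by lia.
by rewrite !big_nat_recr //= addrA.
Qed.

Lemma odd_binom (R : comRingType) (c : R) (N : nat) :
  (1 + c) ^+ N - (1 - c) ^+ N =
  2%:R * c * \sum_(j < N.+1) 'C(N, (j * 2).+1)%:R * (c ^+ 2) ^+ j.
Proof.
rewrite (addrC 1 c) (addrC 1 (- c)) !exprD1n -sumrB.
pose h i := (c ^+ i - (- c) ^+ i) *+ 'C(N, i).
transitivity (\sum_(0 <= i < N.+1 * 2) h i).
  rewrite -(big_mkord xpredT (fun i => c ^+ i *+ 'C(N, i) - (- c) ^+ i *+ 'C(N, i))).
  rewrite [RHS](@big_cat_nat _ _ _ N.+1) //=; last by lia.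
  rewrite [X in _ = _ + X]big1_seq ?addr0.
    by apply: eq_bigr => i _; rewrite /h mulrnBl.
  move=> i /andP [_]; rewrite mem_index_iota => /andP [hi _].
  by rewrite /h bin_small ?mulr0n.
rewrite sum_pairs big_distrr /= -(big_mkord xpredT (fun j => 2%:R * c * ('C(N, (j * 2).+1)%:R * (c ^+ 2) ^+ j))).
apply: eq_bigr => j _.
rewrite /h mulnC !exprM sqrrN subrr mul0rn add0r.
rewrite exprS [(- c) ^+ _.+1]exprS !exprM sqrrN -mulr_natr.
ring.
Qed.

Definition Sdef (R : fieldType) (p : nat) : R :=
  \sum_(1 <= k < ((p + 1) %/ 4).+1) ('C(4 * k - 2, 2 * k - 1))%:R / (20%:R) ^+ k.

Section Main.
Variables (F : fieldType) (p : nat).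
Hypotheses (hp : prime p) (chF : p \in [pchar F]) (op : odd p) (p5 : (p %% 5 != 0)%N).

Let n := ((p - 1) %/ 2)%N.

Lemma pn : p = (n * 2).+1.
Proof. have : (p %% 2 = 1)%N by rewrite modn2 op. rewrite /n; lia. Qed.

Lemma p3 : (3 <= p)%N.
Proof. by have := prime_gt1 hp; move: op; case: (p) => [|[|[|]]]. Qed.

Lemma natf_nz k : (0 < k < p)%N -> k%:R != 0 :> F.
Proof.
move=> /andP [k0 kp]; rewrite -(dvdn_pcharf chF); apply/negP => /dvdn_leq.
by move=> /(_ k0); rewrite leqNgt kp.
Qed.

Lemma two_nz : 2%:R != 0 :> F.
Proof. by apply: natf_nz; rewrite /= (leq_trans _ p3). Qed.

Lemma five_nz : 5%:R != 0 :> F.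
Proof.
rewrite -(dvdn_pcharf chF) (dvdn_prime2 hp (isT : prime 5)).
by apply/eqP => e; move: p5; rewrite e.
Qed.

Lemma pF : p%:R = 0 :> F.
Proof. by apply/eqP; rewrite -(dvdn_pcharf chF). Qed.

Lemma binA m : (m <= n)%N -> ('C(m * 2, m))%:R = ('C(n, m))%:R * (- 4%:R) ^+ m :> F.
Proof.
elim: m => [|m IH] hm; first by rewrite !bin0 expr0 mulr1.
have IH' := IH (ltnW hm).
have hm1 : (m.+1)%:R != 0 :> F.
  by apply: natf_nz; rewrite /= pn; lia.
apply: (mulfI hm1).
have eL : (m.+1%:R * 'C(m.+1*2, m.+1)%N%:R : F) = (2 * (m*2).+1)%N%:R * 'C(m*2,m)%:R.
  by rewrite -!natrM cbin.
have eR : (m.+1%:R * 'C(n, m.+1)%:R : F) = (n - m)%N%:R * 'C(n,m)%:R.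
  by rewrite -!natrM mul_bin_left.
rewrite eL mulrA eR IH' natrB; last by lia.
have h : ((n*2).+1)%N%:R = 0 :> F by rewrite -pn pF.
rewrite mulrSr natrM in h.
rewrite (natrM F 2 (m*2).+1) -(addn1 (m*2)) natrD natrM exprS.
move: h. move: (n%:R : F) => x h. have -> : x = - (2%:R)^-1 by apply: (mulIf two_nz); rewrite mulNr mulVf ?two_nz //; apply/eqP; rewrite -addr_eq0 h. field; exact: two_nz.
Qed.


Let K := ((p + 1) %/ 4)%N.

Lemma four_nz : 4%:R != 0 :> F.
Proof. by rewrite (natrM F 2 2) mulf_neq0 ?two_nz. Qed.

Lemma S_T : Sdef F p =
  - (5%:R)^-1 * \sum_(j < n.+1) 'C(n, (j * 2).+1)%:R * (4%:R / 5%:R) ^+ j.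
Proof.
have hpn := pn.
have hK : (K * 2 <= n.+1)%N by rewrite /K; lia.
have hK2 : (n < K * 2 + 1)%N by rewrite /K; lia.
rewrite /Sdef -/K big_add1 /= big_mkord.
rewrite -(big_mkord xpredT (fun j => 'C(n, (j * 2).+1)%:R * (4%:R / 5%:R) ^+ j)).
rewrite (@big_cat_nat _ _ _ K) //=; last by lia.
rewrite [X in _ + X]big1_seq ?addr0; last first.
  move=> i /andP [_]; rewrite mem_index_iota => /andP [hi _].
  by rewrite bin_small ?mul0r //; lia.
rewrite big_mkord mulr_sumr; apply: eq_bigr => [[i hi]] _ /=.
have -> : (4 * i.+1 - 2 = (i * 2).+1 * 2)%N by lia.
have -> : (2 * i.+1 - 1 = (i * 2).+1)%N by lia.
rewrite binA; last by lia.
rewrite expr_div_n exprS exprS mulnC exprM sqrrN.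
have -> : (20%:R : F) = 4%:R * 5%:R by rewrite -natrM.
have -> : (4%:R : F) ^+ 2 = 4%:R * 4%:R by rewrite expr2.
rewrite !exprMn.
have h4 := four_nz; have h5 := five_nz.
have ha : (4%:R : F) ^+ i != 0 by rewrite expf_neq0.
have hb : (5%:R : F) ^+ i != 0 by rewrite expf_neq0.
move: ((4%:R : F) ^+ i) ((5%:R : F) ^+ i) ha hb => a b ha hb.
have h20 : (20%:R : F) != 0 by rewrite -[20%N]/(4*5)%N natrM mulf_neq0.
by field; rewrite hb h5 ha h20.
Qed.

Variable z : F.
Hypotheses (z10 : z ^+ 10 = -1) (z2 : z ^+ 2 + 1 != 0).

Lemma h8 : z ^+ 8 = z ^+ 6 - z ^+ 4 + z ^+ 2 - 1.
Proof.
apply/eqP; rewrite -subr_eq0; apply/eqP; apply: (mulfI z2).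
rewrite mulr0; have e : z ^+ 10 + 1 = 0 by rewrite z10 addNr.
rewrite -e; ring.
Qed.

Lemma zn0 : z != 0.
Proof. by apply/negP => /eqP e; move: z10; rewrite e expr0n /= => /eqP; rewrite eq_sym oppr_eq0 oner_eq0. Qed.

Lemma z20 : z ^+ 20 = 1.
Proof. by rewrite (exprM z 10 2) z10 sqrrN expr1n. Qed.

Definition cc k := z ^+ k + (z ^+ k)^-1.

Lemma cc_frob k : cc k ^+ p = cc ((k * (p %% 20)) %% 20).
Proof.
rewrite -(pFrobenius_autE chF) pFrobenius_autD_comm; last exact: mulrC.
rewrite !(pFrobenius_autE chF) exprVn -exprM /cc modnMmr.
by rewrite !(expr_mod _ z20).
Qed.

Lemma zinv k : (k <= 10)%N -> (z ^+ k)^-1 = - z ^+ (10 - k).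
Proof.
move=> hk; apply: (mulIf (expf_neq0 k zn0)).
rewrite mulVf ?expf_neq0 ?zn0 // mulNr -exprD subnK // z10 opprK //.
Qed.

Lemma ccE k : (k <= 10)%N -> cc k = z ^+ k - z ^+ (10 - k).
Proof. by move=> hk; rewrite /cc zinv. Qed.

Lemma cc_neg k : (k <= 20)%N -> cc (20 - k) = cc k.
Proof.
move=> hk; have e : (z ^+ (20 - k)) = (z ^+ k)^-1.
  apply: (mulIf (expf_neq0 k zn0)).
  by rewrite mulVf ?expf_neq0 ?zn0 // -exprD subnK // z20.
by rewrite /cc e invrK addrC.
Qed.

Lemma cc_half k : cc (k + 10) = - cc k.
Proof. by rewrite /cc exprD z10 mulrN1 invrN opprD. Qed.

Let w := cc 1.
Let w' := cc 3.
Let phi := cc 2.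
Let psi := cc 6.

Lemma R1 : phi ^+ 2 = phi + 1. Proof. rewrite /phi ccE //=. have := h8. move=> h. ring: h. Qed.
Lemma R2 : psi = 1 - phi. Proof. rewrite /phi /psi !ccE //=. have h := h8. ring: h. Qed.
Lemma R3 : w ^+ 2 = 2%:R + phi. Proof. rewrite /phi /w !ccE //=. have h := h8. ring: h. Qed.
Lemma R4 : w' ^+ 2 = 3%:R - phi. Proof. rewrite /phi /w' !ccE //=. have h := h8. ring: h. Qed.
Lemma R5 : w * w' = 2%:R * phi - 1. Proof. rewrite /phi /w /w' !ccE //=. have h := h8. ring: h. Qed.

Let g := 2%:R * phi - 1.

Lemma g2 : g ^+ 2 = 5%:R.
Proof. have h := R1; rewrite /g; ring: h. Qed.

Lemma gnz : g != 0.
Proof. by apply/negP => /eqP e; move: g2; rewrite e expr0n /= => /eqP; rewrite eq_sym (negbTE five_nz). Qed.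

Lemma wnz : w != 0.
Proof. by apply/negP => /eqP e; move: gnz; rewrite /g -R5 e mul0r eqxx. Qed.
Lemma w'nz : w' != 0.
Proof. by apply/negP => /eqP e; move: gnz; rewrite /g -R5 e mulr0 eqxx. Qed.
Lemma phinz : phi != 0.
Proof. by apply/negP => /eqP e; move: R1; rewrite e expr0n add0r /= => /eqP; rewrite eq_sym oner_eq0. Qed.
Lemma psinz : psi != 0.
Proof.
apply/negP => /eqP e; have : phi * psi = -1 by rewrite R2; have h := R1; ring: h.
by rewrite e mulr0 => /eqP; rewrite eq_sym oppr_eq0 oner_eq0.
Qed.

Lemma Xform : (1 + 2%:R / g) ^+ n = (phi ^+ p) ^+ 2 / w ^+ p * (w / phi ^+ 2).
Proof.
set zz := phi ^+ 2 / w.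
have hz : zz ^+ 2 = 1 + 2%:R / g.
  rewrite /zz /g; have h1 := R1; have h3 := R3.
  field: h1 h3; rewrite ?wnz ?phinz //; by rewrite andbT; exact: gnz.
have zznz : zz != 0 by rewrite /zz mulf_neq0 ?expf_neq0 ?phinz ?invr_eq0 ?wnz.
rewrite -hz -(exprM zz 2 n) (mulnC 2 n).
have -> : (phi ^+ p) ^+ 2 / w ^+ p = zz ^+ p by rewrite /zz expr_div_n exprAC.
by rewrite pn exprSr -(invf_div (phi ^+ 2) w) -/zz mulfK.
Qed.

Lemma Yform : (1 - 2%:R / g) ^+ n = (psi ^+ p) ^+ 2 / w' ^+ p * (w' / psi ^+ 2).
Proof.
set zz := psi ^+ 2 / w'.
have hz : zz ^+ 2 = 1 - 2%:R / g.
  rewrite /zz /g R2; have h1 := R1; have h4 := R4.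
  field: h1 h4; rewrite ?w'nz ?(R2 : psi = _) -?R2 ?psinz //; by rewrite andbT; exact: gnz.
have zznz : zz != 0 by rewrite /zz mulf_neq0 ?expf_neq0 ?psinz ?invr_eq0 ?w'nz.
rewrite -hz -(exprM zz 2 n) (mulnC 2 n).
have -> : (psi ^+ p) ^+ 2 / w' ^+ p = zz ^+ p by rewrite /zz expr_div_n exprAC.
by rewrite pn exprSr -(invf_div (psi ^+ 2) w') -/zz mulfK.
Qed.

Lemma S_XY : Sdef F p = - ((1 + 2%:R / g) ^+ n - (1 - 2%:R / g) ^+ n) * g / 20%:R.
Proof.
rewrite odd_binom.
have -> : (2%:R / g) ^+ 2 = 4%:R / 5%:R.
  by rewrite expr_div_n g2 expr2 -natrM.
rewrite S_T.
move: (\sum_(j < n.+1) _) => T.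
have h20 : (20%:R : F) != 0 by rewrite -[20%N]/(4*5)%N natrM mulf_neq0 ?four_nz ?five_nz.
by field; rewrite ?gnz ?five_nz ?h20 ?two_nz.
Qed.

Lemma c19 : cc 19 = w. Proof. exact: (cc_neg 1). Qed.
Lemma c9 : cc 9 = - w. Proof. by rewrite -c19 (cc_half 9) opprK. Qed.
Lemma c11 : cc 11 = - w. Proof. exact: (cc_half 1). Qed.
Lemma c17 : cc 17 = w'. Proof. exact: (cc_neg 3). Qed.
Lemma c13 : cc 13 = - w'. Proof. exact: (cc_half 3). Qed.
Lemma c7 : cc 7 = - w'. Proof. by rewrite -c17 (cc_half 7) opprK. Qed.
Lemma c18 : cc 18 = phi. Proof. exact: (cc_neg 2). Qed.
Lemma c14 : cc 14 = psi. Proof. exact: (cc_neg 6). Qed.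

Lemma ew' : w' = (2%:R * phi - 1) / w.
Proof. by rewrite -R5 [w * w']mulrC mulfK ?wnz. Qed.

Let h20 : (20%:R : F) != 0.
Proof. by rewrite -[20%N]/(4*5)%N natrM mulf_neq0 ?four_nz ?five_nz. Qed.

Lemma caseA : (p %% 20 == 1)%N || (p %% 20 == 9)%N || (p %% 20 == 11)%N || (p %% 20 == 19)%N ->
  Sdef F p = 0.
Proof.
rewrite S_XY Xform Yform.
have h1 := wnz; have h2 := w'nz; have h3 := phinz; have h4 := psinz.
case/orP => [/orP [/orP [] | ] | ] /eqP hr;
  rewrite /phi /psi /w /w' !cc_frob hr.
- change (- ((cc 2 ^+ 2 / cc 1 * (w / phi ^+ 2)) - cc 6 ^+ 2 / cc 3 * (w' / psi ^+ 2)) * g / 20%:R = 0).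
  rewrite -/w -/w' -/phi -/psi. by field; rewrite ?oppr_eq0 ?h1 ?h2 ?h3 ?h4 ?h20.
- change (- ((cc 18 ^+ 2 / cc 9 * (w / phi ^+ 2)) - cc 14 ^+ 2 / cc 7 * (w' / psi ^+ 2)) * g / 20%:R = 0).
  rewrite c18 c9 c14 c7 -/w -/w' -/phi -/psi. by field; rewrite ?oppr_eq0 ?h1 ?h2 ?h3 ?h4 ?h20.
- change (- ((cc 2 ^+ 2 / cc 11 * (w / phi ^+ 2)) - cc 6 ^+ 2 / cc 13 * (w' / psi ^+ 2)) * g / 20%:R = 0).
  rewrite c11 c13 -/w -/w' -/phi -/psi. by field; rewrite ?oppr_eq0 ?h1 ?h2 ?h3 ?h4 ?h20.
- change (- ((cc 18 ^+ 2 / cc 19 * (w / phi ^+ 2)) - cc 14 ^+ 2 / cc 17 * (w' / psi ^+ 2)) * g / 20%:R = 0).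
  rewrite c18 c19 c14 c17 -/w -/w' -/phi -/psi. by field; rewrite ?oppr_eq0 ?h1 ?h2 ?h3 ?h4 ?h20.
Qed.

Lemma finB : - ((psi ^+ 2 / w' * (w / phi ^+ 2)) - phi ^+ 2 / (- w) * (w' / psi ^+ 2)) * g / 20%:R
  = - (2%:R)^-1.
Proof.
have hw := wnz; have hp' := phinz; have hg := gnz.
have hq : 1 - phi != 0 by rewrite -R2 psinz.
rewrite ew' R2 /g; have h1 := R1; have h3 := R3.
field: h1 h3; rewrite ?oppr_eq0 ?hw ?hp' ?hq ?hg ?h20 ?two_nz //.
Qed.

Lemma finC : - ((psi ^+ 2 / (- w') * (w / phi ^+ 2)) - phi ^+ 2 / w * (w' / psi ^+ 2)) * g / 20%:R
  = (2%:R)^-1.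
Proof.
have hw := wnz; have hp' := phinz; have hg := gnz.
have hq : 1 - phi != 0 by rewrite -R2 psinz.
rewrite ew' R2 /g; have h1 := R1; have h3 := R3.
field: h1 h3; rewrite ?oppr_eq0 ?hw ?hp' ?hq ?hg ?h20 ?two_nz //.
Qed.

Lemma caseB : (p %% 20 == 3)%N || (p %% 20 == 17)%N -> Sdef F p = - (2%:R)^-1.
Proof.
rewrite S_XY Xform Yform -finB.
case/orP => /eqP hr; rewrite /phi /psi /w /w' !cc_frob hr.
- change (- ((cc 6 ^+ 2 / cc 3 * (w / phi ^+ 2)) - cc 18 ^+ 2 / cc 9 * (w' / psi ^+ 2)) * g / 20%:R
    = - ((psi ^+ 2 / w' * (w / phi ^+ 2)) - phi ^+ 2 / (- w) * (w' / psi ^+ 2)) * g / 20%:R).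
  by rewrite c18 c9.
- change (- ((cc 14 ^+ 2 / cc 17 * (w / phi ^+ 2)) - cc 2 ^+ 2 / cc 11 * (w' / psi ^+ 2)) * g / 20%:R
    = - ((psi ^+ 2 / w' * (w / phi ^+ 2)) - phi ^+ 2 / (- w) * (w' / psi ^+ 2)) * g / 20%:R).
  by rewrite c14 c17 c11.
Qed.

Lemma caseC : (p %% 20 == 7)%N || (p %% 20 == 13)%N -> Sdef F p = (2%:R)^-1.
Proof.
rewrite S_XY Xform Yform -finC.
case/orP => /eqP hr; rewrite /phi /psi /w /w' !cc_frob hr.
- change (- ((cc 14 ^+ 2 / cc 7 * (w / phi ^+ 2)) - cc 2 ^+ 2 / cc 1 * (w' / psi ^+ 2)) * g / 20%:R
    = - ((psi ^+ 2 / (- w') * (w / phi ^+ 2)) - phi ^+ 2 / w * (w' / psi ^+ 2)) * g / 20%:R).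
  by rewrite c14 c7.
- change (- ((cc 6 ^+ 2 / cc 13 * (w / phi ^+ 2)) - cc 18 ^+ 2 / cc 19 * (w' / psi ^+ 2)) * g / 20%:R
    = - ((psi ^+ 2 / (- w') * (w / phi ^+ 2)) - phi ^+ 2 / w * (w' / psi ^+ 2)) * g / 20%:R).
  by rewrite c13 c18 c19.
Qed.

End Main.

Section NatAux.
Local Open Scope nat_scope.
Lemma nat20 p (P : nat -> Prop) : (forall r, (r < 20)%N -> p %% 20 = r -> (p %% 5 = r %% 5)%N -> (p %% 2 = r %% 2)%N -> P r) -> P (p %% 20)%N.
Proof.
move=> H; apply: H => //; first by rewrite ltn_mod.
  by rewrite (modn_dvdm p (isT : (5 %| 20)%N)).
by rewrite (modn_dvdm p (isT : (2 %| 20)%N)).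
Qed.
Lemma caseA_nat p : (p %% 2 = 1)%N -> (p %% 5 == 1)%N || (p %% 5 == 4)%N ->
  (p %% 20 == 1)%N || (p %% 20 == 9)%N || (p %% 20 == 11)%N || (p %% 20 == 19)%N.
Proof.
move=> h2 h5; pattern (p %% 20)%N; apply: nat20 => r hr _ e5 e2.
rewrite e5 in h5; rewrite e2 in h2; clear e5 e2.
by move: hr h2 h5; do 20! (case: r => [|r] //).
Qed.
Lemma case2_nat p : (p %% 2 = 1)%N -> (p %% 5 == 2)%N -> (p %% 20 == 7)%N || (p %% 20 == 17)%N.
Proof.
move=> h2 h5; pattern (p %% 20)%N; apply: nat20 => r hr _ e5 e2.
rewrite e5 in h5; rewrite e2 in h2; clear e5 e2.
by move: hr h2 h5; do 20! (case: r => [|r] //).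
Qed.
Lemma case3_nat p : (p %% 2 = 1)%N -> (p %% 5 == 3)%N -> (p %% 20 == 3)%N || (p %% 20 == 13)%N.
Proof.
move=> h2 h5; pattern (p %% 20)%N; apply: nat20 => r hr _ e5 e2.
rewrite e5 in h5; rewrite e2 in h2; clear e5 e2.
by move: hr h2 h5; do 20! (case: r => [|r] //).
Qed.

End NatAux.

Lemma sgn_odd (R : ringType) m : (m %% 2 = 1)%N -> (-1) ^+ m = -1 :> R.
Proof. by move=> h; rewrite -signr_odd -modn2 h expr1. Qed.
Lemma sgn_even (R : ringType) m : (m %% 2 = 0)%N -> (-1) ^+ m = 1 :> R.
Proof. by move=> h; rewrite -signr_odd -modn2 h expr0. Qed.

Theorem corollary3p7 (p : nat) (hp : prime p) (hodd : odd p) (h5 : p != 5%N) :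
  let S : 'F_p :=
    \sum_(1 <= k < ((p + 1) %/ 4).+1) ('C(4 * k - 2, 2 * k - 1))%:R / (20%:R) ^+ k in
  ((p %% 5 == 1)%N || (p %% 5 == 4)%N -> S = 0) /\
  ((p %% 5 == 2)%N -> S = - ((-1) ^+ ((p - 1) %/ 2) / 2%:R)) /\
  ((p %% 5 == 3)%N -> S = (-1) ^+ ((p - 1) %/ 2) / 2%:R).
Proof.
move=> S.
have p5 : (p %% 5 != 0)%N.
  apply/negP => /eqP h; have : (5 %| p)%N by rewrite /dvdn h.
  by rewrite (dvdn_prime2 (isT : prime 5) hp) eq_sym (negbTE h5).
have p2 : (p %% 2 = 1)%N by rewrite modn2 hodd.
have [F [chF [z [z10 z2]]]] := exists_zeta p hp hodd p5.
pose F' := pPrimeCharType chF.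
pose f : {rmorphism 'F_p -> F'} := GRing.in_alg F'.
have fS : f S = Sdef F' p.
  rewrite /S rmorph_sum; apply: eq_bigr => k _.
  by rewrite fmorph_div rmorphXn !rmorph_nat.
have hA := @caseA F' p hp chF hodd p5 z z10 z2.
have hB := @caseB F' p hp chF hodd p5 z z10 z2.
have hC := @caseC F' p hp chF hodd p5 z z10 z2.
have fR e : f ((-1) ^+ e / 2%:R) = (-1) ^+ e / 2%:R.
  by rewrite fmorph_div rmorphXn rmorphN1 rmorph_nat.
split; [|split].
- move=> h; apply: (fmorph_inj f); rewrite fS rmorph0; apply: hA.
  exact: caseA_nat.
- move=> h; apply: (fmorph_inj f); rewrite fS rmorphN fR.
  have := @case2_nat p p2 h.
  case/orP => /eqP e.
  + rewrite sgn_odd; last by move: e; clear; lia.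
    by rewrite hC ?e // mulN1r opprK.
  + rewrite sgn_even; last by move: e; clear; lia.
    by rewrite hB ?e ?eqxx ?orbT // mul1r.
- move=> h; apply: (fmorph_inj f); rewrite fS fR.
  have := @case3_nat p p2 h.
  case/orP => /eqP e.
  + rewrite sgn_odd; last by move: e; clear; lia.
    by rewrite hB ?e // mulN1r.
  + rewrite sgn_even; last by move: e; clear; lia.
    by rewrite hC ?e ?eqxx ?orbT // mul1r.
Qed.
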